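(* Let $D_i$ be a finite set with a total order $\geq_i$ (reflexive, transitive, antisymmetric, total), with strict part $>$. For subsets $X',X''\subseteq D_i$ define $X'\succeq X''$ iff for every $d''\in X''\setminus X'$ there exists $d'\in X'\setminus X''$ with $d'>d''$. Then $\succeq$ is reflexive ($X\succeq X$ for all $X\subseteq D_i$), antisymmetric ($X_1\succeq X_2$ and $X_2\succeq X_1$ imply $X_1=X_2$), and for subsets $X_1,X_2,X_3\subseteq D_i$ with $X_1\not\subseteq X_3$ and $X_3\not\subseteq X_1$, $X_1\succeq X_2$ and $X_2\succeq X_3$ imply $X_1\succeq X_3$.
   Context: Here $D_i$ is the finite set of desire rules of an agent, totally ordered by a priority relation $\geq_i$; $\succeq$ lifts this ordering to sets of desire rules. *)

(* Defs.v *)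
From mathcomp Require Import all_boot.
Set Implicit Arguments. Unset Strict Implicit. Unset Printing Implicit Defensive.

Definition total_order (T : finType) (ge : rel T) : Prop :=
  [/\ reflexive ge, transitive ge, antisymmetric ge & total ge].

Definition gt_of (T : finType) (ge : rel T) (x y : T) : bool := ge x y && (x != y).

Definition set_pref (T : finType) (ge : rel T) (X1 X2 : {set T}) : Prop :=
  forall d2, d2 \in X2 :\: X1 -> exists2 d1, d1 \in X1 :\: X2 & gt_of ge d1 d2.

(* Main.v *)
Require Import Defs.
From mathcomp Require Import all_boot.

Section S.
Variables (T : finType) (ge : rel T).
Hypothesis Hto : total_order ge.

Lemma gt_trans x y z : gt_of ge x y -> gt_of ge y z -> gt_of ge x z.
Proof.
case: Hto => _ tr anti _.
rewrite /gt_of => /andP[xy nxy] /andP[yz nyz]; rewrite (tr _ _ _ xy yz) /=.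
apply/eqP => exz; subst z.
by move/eqP: nxy; apply; apply: anti; rewrite xy yz.
Qed.

Lemma gt_irr x : ~~ gt_of ge x x.
Proof. by rewrite /gt_of eqxx andbF. Qed.

Lemma noascent (P : T -> Prop) :
  (forall z, P z -> exists2 w, P w & gt_of ge w z) -> forall z, ~ P z.
Proof.
move=> step.
suff H : forall n z, #|[set y | gt_of ge y z]| < n -> ~ P z.
  by move=> z; apply: (H _ z (ltnSn _)).
elim=> [//|n IH] z Hn Pz.
have [w Pw gwz] := step z Pz.
apply: (IH w _ Pw).
have sub : [set y | gt_of ge y w] \proper [set y | gt_of ge y z].
  apply/properP; split.
    by apply/subsetP => y; rewrite !inE => h; apply: gt_trans h gwz.
  by exists w; rewrite !inE // gt_irr.
by apply: leq_trans (proper_card sub) _.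
Qed.
End S.

Theorem mainTheorem6 (T : finType) (ge : rel T) :
  total_order ge ->
  (forall X : {set T}, set_pref ge X X) /\
  (forall X1 X2 : {set T}, set_pref ge X1 X2 -> set_pref ge X2 X1 -> X1 = X2) /\
  (forall X1 X2 X3 : {set T}, ~~ (X1 \subset X3) -> ~~ (X3 \subset X1) ->
     set_pref ge X1 X2 -> set_pref ge X2 X3 -> set_pref ge X1 X3).
Proof.
move=> Hto; split; first by move=> X d; rewrite setDv inE.
split.
  move=> X1 X2 H12 H21; apply/setP => z.
  case: (boolP (z \in X1)) => z1; case: (boolP (z \in X2)) => z2 //; exfalso.
  - apply: (@noascent _ _ Hto (fun z => z \in X1 :\: X2 \/ z \in X2 :\: X1) _ z); last by left; rewrite inE z1 z2.
      move=> x [h|h]; [have [w ??] := H21 x h | have [w ??] := H12 x h]; exists w; by auto.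
  - apply: (@noascent _ _ Hto (fun z => z \in X1 :\: X2 \/ z \in X2 :\: X1) _ z); last by right; rewrite inE z1 z2.
      move=> x [h|h]; [have [w ??] := H21 x h | have [w ??] := H12 x h]; exists w; by auto.
move=> X1 X2 X3 _ _ H12 H23 d3 hd3.
case: (boolP [exists d1, (d1 \in X1 :\: X3) && gt_of ge d1 d3]).
  by case/existsP => d1 /andP[??]; exists d1.
rewrite negb_exists => /forallP Hno; exfalso.
have Hno' d1 : d1 \in X1 :\: X3 -> ~~ gt_of ge d1 d3.
  by move=> h; have := Hno d1; rewrite h.
pose P z := [/\ z \notin X1, (z \in X2) || (z \in X3) & (z == d3) || gt_of ge z d3].
have up z w : (z == d3) || gt_of ge z d3 -> gt_of ge w z -> gt_of ge w d3.
  by case/orP => [/eqP ->|h] // g; apply: @gt_trans _ _ Hto _ _ _ g h.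
apply: (@noascent _ _ Hto P _ d3); last first.
  by move: hd3; rewrite /P !inE eqxx => /andP[-> ->]; rewrite orbT.
move=> z [nz1 z23 zd].
case: (boolP (z \in X2)) => z2.
  have hz : z \in X2 :\: X1 by rewrite inE nz1 z2.
  have [d1 hd1 g1] := H12 z hz.
  case: (boolP (d1 \in X3)) => d13; last first.
    by move: (Hno' d1); rewrite !inE d13; move: hd1; rewrite inE => /andP[_ ->] /(_ isT); rewrite (up _ _ zd g1).
  have hd : d1 \in X3 :\: X2 by move: hd1; rewrite !inE d13 => /andP[-> _].
  have [d2 hd2 g2] := H23 d1 hd.
  move: hd2; rewrite inE => /andP[nd23 d22].
  case: (boolP (d2 \in X1)) => d21.
    by move: (Hno' d2); rewrite inE d21 nd23 (up _ _ zd (@gt_trans _ _ Hto _ _ _ g2 g1)) => /(_ isT).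
  exists d2; last by apply: @gt_trans _ _ Hto _ _ _ g2 g1.
  by rewrite /P d21 d22 (up _ _ zd (@gt_trans _ _ Hto _ _ _ g2 g1)) orbT.
have z3 : z \in X3 by move: z23; rewrite (negbTE z2).
have hz : z \in X3 :\: X2 by rewrite inE z2 z3.
have [d2 hd2 g2] := H23 z hz.
move: hd2; rewrite inE => /andP[nd23 d22].
case: (boolP (d2 \in X1)) => d21.
  by move: (Hno' d2); rewrite inE d21 nd23 (up _ _ zd g2) => /(_ isT).
exists d2 => //.
by rewrite /P d21 d22 (up _ _ zd g2) orbT.
Qed.
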